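(* Let $n\ge 1$ be an integer, $a>0$, and let $a_0,\dots,a_{n-1}:((-a,a)\setminus\{0\})\times\mathbb{K}\to\mathbb{K}$ be arbitrary functions, where $\mathbb{K}=\mathbb{R}$ or $\mathbb{C}$. Let $f\in C^\infty(-a,a)$ be a solution of $$f^{(n)}(x)+a_{n-1}(x,f(x))f^{(n-1)}(x)+\cdots+a_0(x,f(x))f(x)=0,\qquad x\in(-a,a)\setminus\{0\},$$ satisfying $f(0)=f'(0)=\cdots=f^{(n-1)}(0)=0$. If there are $M>0$ and $\eta\in(0,a)$ such that $|a_k(x,f(x))|\le M$ for all $0<|x|<\eta$ and $k=0,1,\dots,n-1$, then there exists $\delta>0$ such that $f\equiv 0$ on $[-\delta,\delta]$.
   Context: The coefficients may be singular at $x=0$; the equation is only required to hold for $x\neq 0$. *)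

(* Defs.v *)
From Stdlib Require Export Reals Lra.
Open Scope R_scope.

Fixpoint rsum (n : nat) (g : nat -> R) : R :=
  match n with
  | O => 0
  | S m => rsum m g + g m
  end.

(* [smooth_on a D]: D 0 is C^infinity on (-a,a) and D k is its k-th
   derivative there (each D k is differentiable with derivative D (k+1)). *)
Definition smooth_on (a : R) (D : nat -> R -> R) : Prop :=
  forall (k : nat) (x : R), -a < x < a -> derivable_pt_lim (D k) x (D (S k) x).

(* Complex numbers as pairs (re, im). *)
Definition Cpx : Type := (R * R)%type.
Definition Cadd (z w : Cpx) : Cpx := (fst z + fst w, snd z + snd w).
Definition Cmul (z w : Cpx) : Cpx :=
  (fst z * fst w - snd z * snd w, fst z * snd w + snd z * fst w).
Definition Czero : Cpx := (0, 0).
Definition Cnorm (z : Cpx) : R := sqrt (fst z * fst z + snd z * snd z).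

Fixpoint csum (n : nat) (g : nat -> Cpx) : Cpx :=
  match n with
  | O => Czero
  | S m => Cadd (csum m g) (g m)
  end.

Definition smooth_onC (a : R) (D : nat -> R -> Cpx) : Prop :=
  smooth_on a (fun k x => fst (D k x)) /\ smooth_on a (fun k x => snd (D k x)).

(* Main.v *)
Require Import Defs.
From Stdlib Require Import Reals Lra Lia Classical.
Open Scope R_scope.

Lemma rsum_le N f h : (forall j, (j<N)%nat -> f j <= h j) -> rsum N f <= rsum N h.
Proof. induction N; intros H; simpl; [lra|]. apply Rplus_le_compat; [apply IHN; intros; apply H; lia| apply H; lia]. Qed.

Lemma rsum_const_le N f b : (forall j, (j<N)%nat -> f j <= b) -> rsum N f <= INR N * b.
Proof. induction N; intros H; cbn [rsum]; [simpl; lra|]. rewrite S_INR.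
 assert (rsum N f <= INR N * b) by (apply IHN; intros; apply H; lia).
 assert (f N <= b) by (apply H; lia). lra. Qed.

Lemma rsum_nonneg N f : (forall j, (j<N)%nat -> 0 <= f j) -> 0 <= rsum N f.
Proof. induction N; intros H; simpl; [lra|].
 assert (0 <= rsum N f) by (apply IHN; intros; apply H; lia).
 assert (0 <= f N) by (apply H; lia). lra. Qed.

Lemma rsum_term N f j : (forall j, (j<N)%nat -> 0 <= f j) -> (j<N)%nat -> f j <= rsum N f.
Proof. induction N; intros H Hj; [lia|]. simpl.
 destruct (Nat.eq_dec j N) as [->|Hne].
 - assert (0 <= rsum N f) by (apply rsum_nonneg; intros; apply H; lia). lra.
 - assert (f j <= rsum N f) by (apply IHN; [intros; apply H; lia| lia]).
   assert (0 <= f N) by (apply H; lia). lra. Qed.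

Lemma rsum_abs N f : Rabs (rsum N f) <= rsum N (fun j => Rabs (f j)).
Proof. induction N; simpl. rewrite Rabs_R0; lra.
 eapply Rle_trans; [apply Rabs_triang|]. lra. Qed.

Lemma rsum_scal N f c : rsum N (fun j => c * f j) = c * rsum N f.
Proof. induction N; simpl; [ring|]. rewrite IHN; ring. Qed.

Lemma rsum_cont N (h : nat -> R -> R) x :
  (forall j, (j<N)%nat -> continuity_pt (h j) x) ->
  continuity_pt (fun y => rsum N (fun j => h j y)) x.
Proof. induction N; intros H; simpl.
 - apply continuity_pt_const. intros u v; reflexivity.
 - apply (continuity_pt_plus (fun y => rsum N (fun j => h j y)) (h N)).
   apply IHN; intros; apply H; lia. apply H; lia. Qed.

Lemma abs_cont f x : continuity_pt f x -> continuity_pt (fun y => Rabs (f y)) x.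
Proof. intros H. apply (continuity_pt_comp f Rabs); auto. apply Rcontinuity_abs. Qed.

Lemma core (d K : R) (N : nat) (E1 E2 E1' E2' : nat -> R -> R) :
  0 < d -> 0 <= K -> 2 * INR N * d * K < 1 ->
  (forall j x, (j<N)%nat -> -d <= x <= d ->
     derivable_pt_lim (E1 j) x (E1' j x) /\ derivable_pt_lim (E2 j) x (E2' j x)) ->
  (forall j, (j<N)%nat -> E1 j 0 = 0 /\ E2 j 0 = 0) ->
  (forall j c, (j<N)%nat -> 0 < Rabs c < d ->
     Rabs (E1' j c) <= K * rsum N (fun i => Rabs (E1 i c) + Rabs (E2 i c)) /\
     Rabs (E2' j c) <= K * rsum N (fun i => Rabs (E1 i c) + Rabs (E2 i c))) ->
  forall j x, (j<N)%nat -> -d <= x <= d -> E1 j x = 0 /\ E2 j x = 0.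
Proof.
  intros Hd HK Hsmall Hder H0 Hb.
  set (g := fun y => rsum N (fun i => Rabs (E1 i y) + Rabs (E2 i y))).
  assert (gnn : forall y, 0 <= g y).
  { intro y. apply rsum_nonneg. intros. pose proof (Rabs_pos (E1 j y)); pose proof (Rabs_pos (E2 j y)); lra. }
  destruct (continuity_ab_maj g (-d) d) as [Mx [HM HMx]]. lra.
  { intros c Hc. apply rsum_cont. intros j Hj.
    destruct (Hder j c Hj Hc) as [D1 D2].
    apply (continuity_pt_plus (fun y => Rabs (E1 j y)) (fun y => Rabs (E2 j y)));
    apply abs_cont; apply derivable_continuous_pt; eexists; eassumption. }
  set (S := g Mx).
  assert (pt : forall (F F' : R -> R) x, -d <= x <= d -> F 0 = 0 ->
     (forall y, -d <= y <= d -> derivable_pt_lim F y (F' y)) ->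
     (forall c, 0 < Rabs c < d -> Rabs (F' c) <= K * g c) ->
     Rabs (F x) <= d * K * S).
  { intros F F' x Hx HF0 HFd HFb.
    assert (0 <= S) by apply gnn.
    destruct (Rtotal_order x 0) as [Hlt|[Heq|Hgt]].
    - destruct (MVT_cor2 F F' x 0 Hlt) as [c [Hc1 Hc2]].
      { intros; apply HFd; lra. }
      rewrite HF0 in Hc1.
      assert (Rabs c < d /\ 0 < Rabs c) by (split; [apply Rabs_def1|apply Rabs_pos_lt]; lra).
      assert (HFc := HFb c ltac:(lra)).
      assert (HgS : g c <= S) by (apply HM; lra).
      replace (F x) with (F' c * x) by lra.
      rewrite Rabs_mult. rewrite (Rabs_left x Hlt).
      pose proof (Rabs_pos (F' c)).
      apply Rle_trans with (K * g c * d). apply Rmult_le_compat; lra.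
      assert (K * g c <= K * S) by (apply Rmult_le_compat_l; lra). nra.
    - subst. rewrite HF0, Rabs_R0. apply Rmult_le_pos; [|auto]. apply Rmult_le_pos; lra.
    - destruct (MVT_cor2 F F' 0 x Hgt) as [c [Hc1 Hc2]].
      { intros; apply HFd; lra. }
      rewrite HF0 in Hc1.
      assert (Rabs c < d /\ 0 < Rabs c) by (split; [apply Rabs_def1|apply Rabs_pos_lt]; lra).
      assert (HFc := HFb c ltac:(lra)).
      assert (HgS : g c <= S) by (apply HM; lra).
      replace (F x) with (F' c * x) by lra.
      rewrite Rabs_mult. rewrite (Rabs_right x) by lra.
      pose proof (Rabs_pos (F' c)).
      apply Rle_trans with (K * g c * d). apply Rmult_le_compat; lra.
      assert (K * g c <= K * S) by (apply Rmult_le_compat_l; lra). nra. }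
  assert (Hall : forall x, -d <= x <= d -> g x <= INR N * (2 * (d * K * S))).
  { intros x Hx. apply rsum_const_le. intros j Hj.
    assert (Rabs (E1 j x) <= d * K * S).
    { apply (pt (E1 j) (E1' j)); auto. apply H0; auto.
      intros; apply Hder; auto. intros; apply Hb; auto. }
    assert (Rabs (E2 j x) <= d * K * S).
    { apply (pt (E2 j) (E2' j)); auto. apply H0; auto.
      intros; apply Hder; auto. intros; apply Hb; auto. }
    lra. }
  assert (HS0 : S = 0).
  { assert (0 <= S) by apply gnn. assert (S <= INR N * (2 * (d * K * S))) by (apply Hall; auto).
    nra. }
  intros j x Hj Hx.
  assert (g x <= 0) by (rewrite <- HS0; apply HM; auto).
  assert (Rabs (E1 j x) + Rabs (E2 j x) <= g x).
  { apply (rsum_term N (fun i => Rabs (E1 i x) + Rabs (E2 i x))); auto.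
    intros. pose proof (Rabs_pos (E1 j0 x)); pose proof (Rabs_pos (E2 j0 x)); lra. }
  pose proof (Rabs_pos (E1 j x)); pose proof (Rabs_pos (E2 j x)).
  split; apply NNPP; intro Hn; apply Rabs_pos_lt in Hn; lra.
Qed.

Lemma fst_csum n (h : nat -> Cpx) : fst (csum n h) = rsum n (fun k => fst (h k)).
Proof. induction n; simpl; [reflexivity|]. rewrite IHn; reflexivity. Qed.
Lemma snd_csum n (h : nat -> Cpx) : snd (csum n h) = rsum n (fun k => snd (h k)).
Proof. induction n; simpl; [reflexivity|]. rewrite IHn; reflexivity. Qed.

Lemma fst_le_Cnorm z : Rabs (fst z) <= Cnorm z.
Proof. unfold Cnorm. rewrite <- sqrt_Rsqr_abs. apply sqrt_le_1_alt. unfold Rsqr. nra. Qed.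
Lemma snd_le_Cnorm z : Rabs (snd z) <= Cnorm z.
Proof. unfold Cnorm. rewrite <- sqrt_Rsqr_abs. apply sqrt_le_1_alt. unfold Rsqr. nra. Qed.

Lemma choose_d (n : nat) (M eta a : R) : (1 <= n)%nat -> 0 < M -> 0 < eta < a ->
  exists d, 0 < d /\ d < eta /\ d < a /\ 2 * INR n * d * (1 + M) < 1.
Proof.
  intros Hn HM He.
  assert (Hn' : 1 <= INR n) by (apply (le_INR 1); lia).
  set (q := 4 * INR n * (1 + M)).
  assert (Hq : 0 < q) by (unfold q; nra).
  exists (Rmin (eta/2) (1/q)).
  assert (Rmin (eta/2) (1/q) <= eta/2) by apply Rmin_l.
  assert (Rmin (eta/2) (1/q) <= 1/q) by apply Rmin_r.
  assert (0 < Rmin (eta/2) (1/q)) by (apply Rmin_pos; [lra| apply Rdiv_lt_0_compat; lra]).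
  repeat split; try lra.
  assert (q * (1/q) = 1) by (field; lra).
  assert (2 * INR n * Rmin (eta / 2) (1 / q) * (1 + M) = q/2 * Rmin (eta / 2) (1 / q)) by (unfold q; field).
  rewrite H3. assert (q/2 * Rmin (eta/2) (1/q) <= q/2 * (1/q)) by (apply Rmult_le_compat_l; lra).
  lra.
Qed.

Theorem corollary3 :
  (* K = R *)
  (forall (n : nat) (a : R) (A : nat -> R -> R -> R) (D : nat -> R -> R),
     (1 <= n)%nat -> 0 < a ->
     smooth_on a D ->
     (forall x, -a < x < a -> x <> 0 ->
        D n x + rsum n (fun k => A k x (D O x) * D k x) = 0) ->
     (forall k, (k < n)%nat -> D k 0 = 0) ->
     (exists M eta, 0 < M /\ 0 < eta < a /\
        forall x k, 0 < Rabs x < eta -> (k < n)%nat -> Rabs (A k x (D O x)) <= M) ->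
     exists delta, 0 < delta < a /\ forall x, -delta <= x <= delta -> D O x = 0)
  /\
  (* K = C *)
  (forall (n : nat) (a : R) (A : nat -> R -> Cpx -> Cpx) (D : nat -> R -> Cpx),
     (1 <= n)%nat -> 0 < a ->
     smooth_onC a D ->
     (forall x, -a < x < a -> x <> 0 ->
        Cadd (D n x) (csum n (fun k => Cmul (A k x (D O x)) (D k x))) = Czero) ->
     (forall k, (k < n)%nat -> D k 0 = Czero) ->
     (exists M eta, 0 < M /\ 0 < eta < a /\
        forall x k, 0 < Rabs x < eta -> (k < n)%nat -> Cnorm (A k x (D O x)) <= M) ->
     exists delta, 0 < delta < a /\ forall x, -delta <= x <= delta -> D O x = Czero).
Proof.
  split.
  - intros n a A D Hn Ha Hs Heq H0 [M [eta [HM [Heta Hb]]]].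
    destruct (choose_d n M eta a Hn HM Heta) as [d [Hd1 [Hd2 [Hd3 Hd4]]]].
    exists d. split; [lra|]. intros x Hx.
    assert (Hc := core d (1+M) n D (fun _ _ => 0) (fun j => D (S j)) (fun _ _ => 0)
      Hd1 ltac:(lra) Hd4).
    refine (proj1 (Hc _ _ _ O x ltac:(lia) Hx)).
    + intros j y Hj Hy. split. apply Hs; lra. apply derivable_pt_lim_const.
    + intros j Hj. split; [apply H0; auto | reflexivity].
    + intros j c Hj Hcd.
      set (g := rsum n (fun i => Rabs (D i c) + Rabs 0)).
      assert (gnn : 0 <= g).
      { apply rsum_nonneg. intros. pose proof (Rabs_pos (D j0 c)); pose proof (Rabs_pos 0); lra. }
      split; [| rewrite Rabs_R0; nra].
      destruct (Nat.eq_dec (S j) n) as [Heqn|Hne].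
      * rewrite Heqn.
        assert (Hc0 : c <> 0) by (intro; subst; rewrite Rabs_R0 in Hcd; lra).
        assert (HE := Heq c ltac:(destruct Hcd as [_ Hcd']; apply Rabs_def2 in Hcd'; lra) Hc0).
        replace (D n c) with (- rsum n (fun k => A k c (D 0%nat c) * D k c)) by lra.
        rewrite Rabs_Ropp. eapply Rle_trans; [apply rsum_abs|].
        apply Rle_trans with (rsum n (fun k => M * (Rabs (D k c) + Rabs 0))).
        { apply rsum_le. intros k Hk. rewrite Rabs_mult, Rabs_R0, Rplus_0_r.
          apply Rmult_le_compat_r; [apply Rabs_pos|]. apply Hb; auto; lra. }
        rewrite rsum_scal. fold g. nra.
      * assert (Rabs (D (S j) c) <= g).
        { apply Rle_trans with (Rabs (D (S j) c) + Rabs 0).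
          rewrite Rabs_R0; lra.
          apply (rsum_term n (fun i => Rabs (D i c) + Rabs 0)); [|lia].
          intros. pose proof (Rabs_pos (D j0 c)); pose proof (Rabs_pos 0); lra. }
        nra.
  - intros n a A D Hn Ha [Hs1 Hs2] Heq H0 [M [eta [HM [Heta Hb]]]].
    destruct (choose_d n M eta a Hn HM Heta) as [d [Hd1 [Hd2 [Hd3 Hd4]]]].
    exists d. split; [lra|]. intros x Hx.
    assert (Hc := core d (1+M) n (fun k y => fst (D k y)) (fun k y => snd (D k y))
      (fun j y => fst (D (S j) y)) (fun j y => snd (D (S j) y))
      Hd1 ltac:(lra) Hd4).
    cut (fst (D O x) = 0 /\ snd (D O x) = 0).
    { intros [R1 R2]. destruct (D 0%nat x) as [u v]. simpl in *. subst. reflexivity. }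
    refine (Hc _ _ _ O x ltac:(lia) Hx).
    + intros j y Hj Hy. split. apply Hs1; lra. apply Hs2; lra.
    + intros j Hj. rewrite (H0 j Hj). split; reflexivity.
    + intros j c Hj Hcd.
      set (g := rsum n (fun i => Rabs (fst (D i c)) + Rabs (snd (D i c)))).
      assert (gnn : 0 <= g).
      { apply rsum_nonneg. intros. pose proof (Rabs_pos (fst (D j0 c))); pose proof (Rabs_pos (snd (D j0 c))); lra. }
      destruct (Nat.eq_dec (S j) n) as [Heqn|Hne].
      * rewrite Heqn.
        assert (Hc0 : c <> 0) by (intro; subst; rewrite Rabs_R0 in Hcd; lra).
        assert (HE := Heq c ltac:(destruct Hcd as [_ Hcd']; apply Rabs_def2 in Hcd'; lra) Hc0).
        assert (HE1 := f_equal fst HE). assert (HE2 := f_equal snd HE).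
        simpl in HE1, HE2. rewrite fst_csum in HE1. rewrite snd_csum in HE2.
        split.
        -- replace (fst (D n c)) with (- rsum n (fun k => fst (Cmul (A k c (D 0%nat c)) (D k c)))) by lra.
           rewrite Rabs_Ropp. eapply Rle_trans; [apply rsum_abs|].
           apply Rle_trans with (rsum n (fun k => M * (Rabs (fst (D k c)) + Rabs (snd (D k c))))).
           { apply rsum_le. intros k Hk. unfold Cmul; simpl.
             assert (HA := Hb c k ltac:(lra) Hk).
             pose proof (fst_le_Cnorm (A k c (D 0%nat c))).
             pose proof (snd_le_Cnorm (A k c (D 0%nat c))).
             eapply Rle_trans. unfold Rminus. apply Rabs_triang.
             rewrite Rabs_Ropp, !Rabs_mult.
             pose proof (Rabs_pos (fst (D k c))). pose proof (Rabs_pos (snd (D k c))).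
             nra. }
           rewrite rsum_scal. fold g. nra.
        -- replace (snd (D n c)) with (- rsum n (fun k => snd (Cmul (A k c (D 0%nat c)) (D k c)))) by lra.
           rewrite Rabs_Ropp. eapply Rle_trans; [apply rsum_abs|].
           apply Rle_trans with (rsum n (fun k => M * (Rabs (fst (D k c)) + Rabs (snd (D k c))))).
           { apply rsum_le. intros k Hk. unfold Cmul; simpl.
             assert (HA := Hb c k ltac:(lra) Hk).
             pose proof (fst_le_Cnorm (A k c (D 0%nat c))).
             pose proof (snd_le_Cnorm (A k c (D 0%nat c))).
             eapply Rle_trans. apply Rabs_triang.
             rewrite !Rabs_mult.
             pose proof (Rabs_pos (fst (D k c))). pose proof (Rabs_pos (snd (D k c))).
             nra. }
           rewrite rsum_scal. fold g. nra.
      * assert (Rabs (fst (D (S j) c)) + Rabs (snd (D (S j) c)) <= g).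
        { apply (rsum_term n (fun i => Rabs (fst (D i c)) + Rabs (snd (D i c)))); [|lia].
          intros. pose proof (Rabs_pos (fst (D j0 c))); pose proof (Rabs_pos (snd (D j0 c))); lra. }
        pose proof (Rabs_pos (fst (D (S j) c))); pose proof (Rabs_pos (snd (D (S j) c))).
        split; nra.
Qed.
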